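(* Under the standing setup, for every $u\in\widetilde X$ there exists $z^*\in\mathbb{R}^m$ with $\|z^*\|\le\|u-u_{NN}\|$ and \[\tilde g_i(z^*,u)\le-\frac{\varepsilon}{60}\|u-u_{NN}\|\quad\forall\,i=1,\ldots,2\ell.\]
   Context: Norms are Euclidean. Standing setup: $X\subseteq\mathbb{R}^d$ has reach $\tau_X>0$, where $\tau_X=\sup\{t\ge0:\text{every }x\text{ with }d(x,X)<t\text{ has a unique closest point in }\overline X\}$; $\widetilde X=X+B(0,\tau_X/2)$; for $u\in\widetilde X$, $u_{NN}$ is the unique closest point to $u$ in $\overline X$. $\varepsilon\in(0,1)$. $S_X=\overline{\{(x-y)/\|x-y\|:x\ne y\in X\}}$. A linear $\Pi\colon\mathbb{R}^d\to\mathbb{R}^m$ provides $\eta$-convex hull distortion for $T\subseteq S^{d-1}$ if $|\,\|\Pi x\|-\|x\|\,|<\eta$ for all $x\in\operatorname{conv}(T)$. $\{w_1,\ldots,w_\ell\}\subseteq S_X$ is finite; $\Pi\in\mathbb{R}^{m\times d}$ provides $\frac{\varepsilon}{60}$-convex hull distortion for $S_X$ (e.g. it provides $\frac{\varepsilon}{240}$-convex hull distortion). For $z\in\mathbb{R}^m$, $u\in\widetilde X$, $i=1,\ldots,\ell$: $\tilde g_i(z,u)=\langle z,\Pi w_i\rangle-\langle u-u_{NN},w_i\rangle-\frac{\varepsilon}{30}\|u-u_{NN}\|$, $\tilde g_{\ell+i}(z,u)=\langle u-u_{NN},w_i\rangle-\langle z,\Pi w_i\rangle-\frac{\varepsilon}{30}\|u-u_{NN}\|$.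 *)

(* Defs.v *)
From HB Require Import structures.
From mathcomp Require Import all_boot all_order all_algebra.
From mathcomp Require Import boolp classical_sets reals constructive_ereal ereal.
Set Implicit Arguments. Unset Strict Implicit. Unset Printing Implicit Defensive.
Import Order.TTheory GRing.Theory Num.Theory.
Local Open Scope classical_set_scope.
Local Open Scope ring_scope.

Section Defs.
Variable R : realType.

Definition dotv (n : nat) (u v : 'cV[R]_n) : R := \sum_(i < n) u i 0 * v i 0.
Definition enorm (n : nat) (v : 'cV[R]_n) : R := Num.sqrt (dotv v v).

Definition eclosure (n : nat) (X : set 'cV[R]_n) : set 'cV[R]_n :=
  [set y | forall e : R, 0 < e -> exists2 x, X x & enorm (y - x) < e].

Definition edist (n : nat) (x : 'cV[R]_n) (X : set 'cV[R]_n) : R :=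
  inf [set enorm (x - y) | y in X].

Definition closest (n : nat) (X : set 'cV[R]_n) (x y : 'cV[R]_n) : Prop :=
  eclosure X y /\ forall z, eclosure X z -> enorm (x - y) <= enorm (x - z).

Definition has_unique_nn (n : nat) (X : set 'cV[R]_n) (x : 'cV[R]_n) : Prop :=
  exists! y, closest X x y.

Definition reach (n : nat) (X : set 'cV[R]_n) : \bar R :=
  ereal_sup [set t%:E | t in
    [set t : R | 0 <= t /\ forall x, edist x X < t -> has_unique_nn X x]].

(* tilde X = X + B(0, tau_X / 2) (open ball) *)
Definition tube (n : nat) (X : set 'cV[R]_n) : set 'cV[R]_n :=
  [set u | exists2 x, X x & ((enorm (u - x))%:E < reach X * (2^-1)%:E)%E].

(* u_NN : the (unique, for u in tilde X) closest point to u in cl X *)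
Definition nnpt (n : nat) (X : set 'cV[R]_n) (u : 'cV[R]_n) : 'cV[R]_n :=
  xget 0 [set y | closest X u y].

Definition secants (n : nat) (X : set 'cV[R]_n) : set 'cV[R]_n :=
  eclosure [set v | exists x y, [/\ X x, X y, x <> y
                                  & v = (enorm (x - y))^-1 *: (x - y)]].

Definition convhull (n : nat) (T : set 'cV[R]_n) : set 'cV[R]_n :=
  [set x | exists (k : nat) (c : 'I_k -> R) (t : 'I_k -> 'cV[R]_n),
      [/\ forall i, 0 <= c i, \sum_(i < k) c i = 1, forall i, T (t i)
        & x = \sum_(i < k) c i *: t i]].

Definition cvx_hull_distortion (m d : nat) (Pi : 'M[R]_(m, d)) (eta : R)
    (T : set 'cV[R]_d) : Prop :=
  forall x, convhull T x -> `| enorm (Pi *m x) - enorm x | < eta.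

(* the functions tilde g_i, i in 'I_(l + l) (i < l : first family,
   i >= l : second family) *)
Definition gtilde (m d l : nat) (Pi : 'M[R]_(m, d)) (w : 'I_l -> 'cV[R]_d)
    (eps : R) (X : set 'cV[R]_d) (i : 'I_(l + l)) (z : 'cV[R]_m)
    (u : 'cV[R]_d) : R :=
  let r := u - nnpt X u in
  match split i with
  | inl j => dotv z (Pi *m w j) - dotv r (w j) - eps / 30 * enorm r
  | inr j => dotv r (w j) - dotv z (Pi *m w j) - eps / 30 * enorm r
  end.

End Defs.

(* Main.v *)
Require Import Defs.
From HB Require Import structures.
From mathcomp Require Import all_boot all_order all_algebra.
From mathcomp Require Import boolp classical_sets reals constructive_ereal ereal.
From mathcomp Require Import topology normedtype derive matrix_normedtype.
From mathcomp Require Import ring lra.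
Import Order.TTheory GRing.Theory Num.Theory numFieldTopology.Exports numFieldNormedType.Exports.
Local Open Scope classical_set_scope.
Local Open Scope ring_scope.

Section Alg.
Context {R : realType}.
Implicit Types (n : nat).

Lemma dotvC {n} (u v : 'cV[R]_n) : dotv u v = dotv v u.
Proof. by apply: eq_bigr => i _; rewrite mulrC. Qed.
Lemma dotvDl {n} (u v x : 'cV[R]_n) : dotv (u + v) x = dotv u x + dotv v x.
Proof. by rewrite /dotv -big_split; apply: eq_bigr => i _; rewrite mxE mulrDl. Qed.
Lemma dotvZl {n} c (u x : 'cV[R]_n) : dotv (c *: u) x = c * dotv u x.
Proof. by rewrite /dotv mulr_sumr; apply: eq_bigr => i _; rewrite mxE mulrA. Qed.
Lemma dotvNl {n} (u x : 'cV[R]_n) : dotv (- u) x = - dotv u x.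
Proof. by rewrite -scaleN1r dotvZl mulN1r. Qed.
Lemma dotvBl {n} (u v x : 'cV[R]_n) : dotv (u - v) x = dotv u x - dotv v x.
Proof. by rewrite dotvDl dotvNl. Qed.
Lemma dotvDr {n} (u v x : 'cV[R]_n) : dotv x (u + v) = dotv x u + dotv x v.
Proof. by rewrite dotvC dotvDl !(dotvC x). Qed.
Lemma dotvZr {n} c (u x : 'cV[R]_n) : dotv x (c *: u) = c * dotv x u.
Proof. by rewrite dotvC dotvZl dotvC. Qed.
Lemma dotvNr {n} (u x : 'cV[R]_n) : dotv x (- u) = - dotv x u.
Proof. by rewrite dotvC dotvNl dotvC. Qed.
Lemma dotvBr {n} (u v x : 'cV[R]_n) : dotv x (u - v) = dotv x u - dotv x v.
Proof. by rewrite dotvDr dotvNr. Qed.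
Lemma dotv_ge0 {n} (u : 'cV[R]_n) : 0 <= dotv u u.
Proof. by apply: sumr_ge0 => i _; by rewrite -expr2 sqr_ge0. Qed.
Lemma enorm_ge0 {n} (u : 'cV[R]_n) : 0 <= enorm u.
Proof. exact: sqrtr_ge0. Qed.
Lemma enorm_sq {n} (u : 'cV[R]_n) : enorm u ^+ 2 = dotv u u.
Proof. by rewrite /enorm sqr_sqrtr // dotv_ge0. Qed.
Lemma enormZ {n} c (u : 'cV[R]_n) : enorm (c *: u) = `|c| * enorm u.
Proof.
by rewrite /enorm dotvZl dotvZr mulrA -expr2 sqrtrM ?sqr_ge0 // sqrtr_sqr.
Qed.
Lemma enormN {n} (u : 'cV[R]_n) : enorm (- u) = enorm u.
Proof. by rewrite -scaleN1r enormZ normrN normr1 mul1r. Qed.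

Lemma CS_sq {n} (u v : 'cV[R]_n) : dotv u v ^+ 2 <= dotv u u * dotv v v.
Proof.
have [B0|Bp] := eqVneq (dotv v v) 0.
  have : dotv u v = 0.
    have h t : 0 <= dotv u u - 2 * t * dotv u v.
      have := dotv_ge0 (u - t *: v).
      rewrite dotvBl !dotvBr !dotvZl !dotvZr B0 (dotvC v u). lra.
    apply/eqP/negPn/negP => hx.
    have := h ((dotv u u + 1) / (2 * dotv u v)).
    have -> : 2 * ((dotv u u + 1) / (2 * dotv u v)) * dotv u v = dotv u u + 1.
      by field; rewrite hx.
    lra.
  by move=> ->; rewrite expr0n /= mulr_ge0 // dotv_ge0.
set B := dotv v v; set x := dotv u v.
have hB : 0 < B by rewrite lt_def Bp dotv_ge0.
have := dotv_ge0 (B *: u - x *: v).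
rewrite dotvBl !dotvBr !dotvZl !dotvZr (dotvC v u) -/B -/x => h.
have : 0 <= B * (B * dotv u u - x ^+ 2) by nra.
rewrite pmulr_rge0 // subr_ge0 => h'; nra.
Qed.

Lemma CS {n} (u v : 'cV[R]_n) : dotv u v <= enorm u * enorm v.
Proof.
rewrite /enorm -sqrtrM ?dotv_ge0 //.
apply: le_trans (ler_norm _) _.
rewrite -sqrtr_sqr; apply: ler_wsqrtr; exact: CS_sq.
Qed.
End Alg.

Section Core.
Context {R : realType}.

Lemma cont_dot m (c : 'cV[R]_m) :
  continuous (fun v : 'rV[R]_m => (dotv v^T c : R^o)).
Proof.
have -> : (fun v : 'rV[R]_m => (dotv v^T c : R^o)) =
          (fun v => \big[+%R/0]_(k <- index_enum 'I_m) ((v 0 k * c k 0) : R^o)).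
  by apply: funext => v; apply: eq_bigr => k _; rewrite mxE.
apply: continuous_big; first exact: add_continuous.
move=> k _ v; apply: continuousM; first exact: coord_continuous.
exact: cst_continuous.
Qed.

Lemma cont_dotvv m :
  continuous (fun v : 'rV[R]_m => (dotv v^T v^T : R^o)).
Proof.
have -> : (fun v : 'rV[R]_m => (dotv v^T v^T : R^o)) =
          (fun v => \big[+%R/0]_(k <- index_enum 'I_m) ((v 0 k * v 0 k) : R^o)).
  by apply: funext => v; apply: eq_bigr => k _; rewrite !mxE.
apply: continuous_big; first exact: add_continuous.
by move=> k _ v; apply: continuousM; exact: coord_continuous.
Qed.


Definition pos (x : R) := Num.max x 0.

Lemma pos_ge0 x : 0 <= pos x.
Proof. by rewrite /pos le_max lexx orbT. Qed.

Lemma pos_mul x : pos x * x = pos x ^+ 2.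
Proof.
rewrite /pos; case: (lerP x 0) => h.
  by rewrite mul0r expr0n.
by rewrite expr2.
Qed.

Lemma pos_bound x y t : 0 <= t ->
  pos (x + t * y) ^+ 2 <= pos x ^+ 2 + 2 * t * pos x * y + t ^+ 2 * y ^+ 2.
Proof.
move=> t0; rewrite /pos.
case: (lerP (x + t * y) 0) => h1; case: (lerP x 0) => h2.
- rewrite ?expr0n /=; nra.
- rewrite ?expr0n /=; nra.
- rewrite ?expr0n /=; nra.
- rewrite ?expr0n /=; nra.
Qed.


Lemma dotv0l n (x : 'cV[R]_n) : dotv 0 x = 0.
Proof. by rewrite /dotv big1 // => i _; rewrite mxE mul0r. Qed.

Lemma core m n (rho : R) (a : 'I_n -> 'cV[R]_m) (b : 'I_n -> R) :
  0 <= rho ->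
  (forall p : 'I_n -> R, (forall i, 0 <= p i) -> 0 < \sum_i p i ->
     exists2 z : 'cV[R]_m, dotv z z <= rho ^+ 2 &
        \sum_i p i * (dotv z (a i) + b i) <= 0) ->
  exists2 z : 'cV[R]_m, dotv z z <= rho ^+ 2 & forall i, dotv z (a i) + b i <= 0.
Proof.
move=> rho0 dual.
pose F (v : 'rV[R]_m) : R^o := \sum_i pos (dotv v^T (a i) + b i) ^+ 2.
pose A := [set v : 'rV[R]_m | dotv v^T v^T <= rho ^+ 2].
have A0 : A !=set0.
  by exists 0; rewrite /A /= trmx0 dotv0l sqr_ge0.
have cA : compact A.
  apply: bounded_closed_compact.
    rewrite /=; apply: filterS (nbhs_pinfty_ge (num_real rho)) => M rhoM v Av.
    rewrite /= [X in X <= _]/Num.norm /= mx_normrE; apply: bigmax_le => [|[i j] _ /=]; first lra.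
    rewrite (ord1 i).
    have : v 0 j ^+ 2 <= rho ^+ 2.
      apply: le_trans Av; rewrite /dotv (bigD1 j) //= !mxE -expr2 lerDl.
      by apply: sumr_ge0 => k _; rewrite !mxE -expr2 sqr_ge0.
    move=> h; rewrite ler_norml; apply/andP; split; nra.
  have -> : A = (fun v => dotv v^T v^T : R^o) @^-1` [set x | x <= rho ^+ 2] by [].
  by apply: preimage_closed; [move=> v _; exact: cont_dotvv | exact: closed_le].
have cF : {within A, continuous F}.
  apply: continuous_subspaceT; rewrite /F.
  apply: continuous_big; first exact: add_continuous.
  move=> i _.
  have hp : continuous (fun v : 'rV[R]_m => pos (dotv v^T (a i) + b i) : R^o).
    move=> v; apply: (@continuous_max R _ (fun v => dotv v^T (a i) + b i) (fun=> 0)).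
      by apply: continuousD; [exact: cont_dot|exact: cst_continuous].
    exact: cst_continuous.
  have -> : (fun v : 'rV[R]_m => pos (dotv v^T (a i) + b i) ^+ 2 : R^o) =
     (fun v => pos (dotv v^T (a i) + b i) * pos (dotv v^T (a i) + b i)).
    by apply: funext => v; rewrite expr2.
  move=> v; exact: (cvgM (hp v) (hp v)).
have [z0 z0A z0min] := compact_EVT_min A0 cA cF.
rewrite inE /A /= in z0A.
set z := z0^T in z0A.
pose G (x : 'cV[R]_m) i := dotv x (a i) + b i.
case: (boolP [forall i, G z i <= 0]) => [/forallP H | /forallPn [i0 hi0]].
  by exists z.
exfalso.
pose p i := pos (G z i).
have p0 i : 0 <= p i by exact: pos_ge0.
have pi0 : 0 < p i0.
  rewrite -ltNge in hi0; rewrite /p /pos lt_max hi0 //.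
have Sp : 0 < \sum_i p i.
  apply: (lt_le_trans pi0); rewrite (bigD1 i0) //= lerDl.
  by apply: sumr_ge0 => i _.
have [y yA hy] := dual p p0 Sp.
pose P := \sum_i p i ^+ 2.
have P0 : 0 < P.
  apply: (@lt_le_trans _ _ (p i0 ^+ 2)); first by rewrite exprn_gt0.
  rewrite /P (bigD1 i0) //= lerDl.
  by apply: sumr_ge0 => i _; rewrite sqr_ge0.
pose Y := \sum_i (G y i - G z i) ^+ 2.
have Y0 : 0 <= Y by apply: sumr_ge0 => i _; rewrite sqr_ge0.
pose t := P / (Y + P).
have tYP : t * (Y + P) = P by rewrite /t mulrVK // unitfE; apply: lt0r_neq0; lra.
have t0 : 0 < t by rewrite /t divr_gt0 //; lra.
have t1 : t <= 1 by rewrite /t ler_pdivrMr; lra.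
pose zt := z + t *: (y - z).
have ztA : dotv zt zt <= rho ^+ 2.
  have hzy := dotv_ge0 (z - y).
  rewrite /zt !(dotvDl, dotvDr, dotvZl, dotvZr, dotvBl, dotvBr, dotvNl, dotvNr) ?(dotvC y z).
  rewrite !(dotvDl, dotvDr, dotvZl, dotvZr, dotvBl, dotvBr, dotvNl, dotvNr) ?(dotvC y z) in hzy.
  have hz := dotv_ge0 z; have hy' := dotv_ge0 y.
  have ht : 0 <= t * (1 - t) by apply: mulr_ge0; lra.
  have := mulr_ge0 ht hzy; nra.
have Fle := z0min (zt^T); rewrite !inE /A /= trmxK in Fle.
have {}Fle := Fle ztA.
rewrite /F /= trmxK -/z in Fle.
have Gzt i : G zt i = G z i + t * (G y i - G z i).
  rewrite /G /zt dotvDl dotvZl dotvBl; ring.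
have Fz : \sum_i pos (dotv z (a i) + b i) ^+ 2 = P by [].
rewrite Fz in Fle.
have Fzt : \sum_i pos (dotv zt (a i) + b i) ^+ 2 <=
   \sum_i (p i ^+ 2 + 2 * t * p i * (G y i - G z i) + t ^+ 2 * (G y i - G z i) ^+ 2).
  apply: ler_sum => i _; rewrite -/(G zt i) Gzt; exact: pos_bound (ltW t0).
rewrite !big_split /= -/P -!mulr_sumr in Fzt.
have hpG : \sum_i p i * (G y i - G z i) <= - P.
  rewrite (eq_bigr (fun i => p i * G y i - p i ^+ 2)); last first.
    by move=> i _; rewrite mulrBr /p pos_mul.
  rewrite sumrB -/P; have : \sum_i p i * G y i <= 0 by exact: hy.
  lra.
have e1 : \sum_i 2 * t * p i * (G y i - G z i) =
    2 * t * \sum_i p i * (G y i - G z i).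
  by rewrite mulr_sumr; apply: eq_bigr => i _; rewrite mulrA.
rewrite e1 -/Y in Fzt.
nra.
Qed.

End Core.

Section Main.
Context {R : realType}.

Lemma dotv0r n (x : 'cV[R]_n) : dotv x 0 = 0.
Proof. by rewrite dotvC dotv0l. Qed.

Lemma dotv_sumr n (I : finType) (x : 'cV[R]_n) (f : I -> 'cV[R]_n) :
  dotv x (\sum_i f i) = \sum_i dotv x (f i).
Proof.
by apply: (big_morph (dotv x)); [move=> u v; exact: dotvDr | exact: dotv0r].
Qed.

Lemma secantsN d (X : set 'cV[R]_d) w : secants X w -> secants X (- w).
Proof.
move=> sw eps eps0.
case: (sw eps eps0) => x [x1 [y1 [X1 Y1 ne exy] ] ] hx.
exists ((enorm (y1 - x1))^-1 *: (y1 - x1)).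
  by exists y1, x1; split => //; apply/nesym.
rewrite -(opprB x1 y1) enormN scalerN -exy.
by rewrite -opprD enormN.
Qed.

End Main.

Theorem lemma4p3 (R : realType) (d m l : nat) (X : set 'cV[R]_d)
    (eps : R) (w : 'I_l -> 'cV[R]_d) (Pi : 'M[R]_(m, d)) :
  (0%E < reach X)%E ->
  0 < eps < 1 ->
  (forall j, secants X (w j)) ->
  cvx_hull_distortion Pi (eps / 60) (secants X) ->
  forall u, tube X u ->
  exists z : 'cV[R]_m,
    enorm z <= enorm (u - nnpt X u) /\
    forall i : 'I_(l + l),
      gtilde Pi w eps X i z u <= - (eps / 60) * enorm (u - nnpt X u).
Proof.
move=> _ _ sw hdist u _.
set r := u - nnpt X u; set rho := enorm r.
have rho0 : 0 <= rho := enorm_ge0 r.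
pose t (i : 'I_(l + l)) := match split i with inl j => w j | inr j => - w j end.
have st i : secants X (t i).
  by rewrite /t; case: (split i) => j; [exact: sw | exact: secantsN].
pose a i := Pi *m t i.
pose b i := - dotv r (t i) - eps / 30 * rho + eps / 60 * rho.
have [z zA hz] : exists2 z : 'cV[R]_m, dotv z z <= rho ^+ 2 &
    forall i, dotv z (a i) + b i <= 0.
  apply: core => // p p0 Sp.
  set S := \sum_i p i in Sp.
  pose v := \sum_i p i *: t i.
  set N := enorm (Pi *m v).
  have hdual : exists2 z : 'cV[R]_m, dotv z z <= rho ^+ 2 & dotv z (Pi *m v) = - (rho * N).
    have [N0|Nn0] := eqVneq N 0.
      exists 0; first by rewrite dotv0l sqr_ge0.
      by rewrite dotv0l N0 mulr0 oppr0.
    have Np : 0 < N by rewrite lt_def Nn0 enorm_ge0.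
    exists (- (rho / N) *: (Pi *m v)).
      rewrite dotvZl dotvZr -enorm_sq -/N; apply: le_trans (le_refl _) _.
      have -> : - (rho / N) * (- (rho / N) * N ^+ 2) = rho ^+ 2 by field.
      by [].
    rewrite dotvZl -enorm_sq -/N; by field.
  have [z zA hzv] := hdual.
  exists z => //.
  have e1 : \sum_i p i * (dotv z (a i) + b i) =
      dotv z (Pi *m v) - dotv r v - eps / 60 * rho * S.
    rewrite /v mulmx_sumr !dotv_sumr /S mulr_sumr -!sumrB.
    apply: eq_bigr => i _; rewrite /a /b -scalemxAr dotvZr dotvZr; by field.
  rewrite e1 hzv.
  have hcs : - dotv r v <= rho * enorm v.
    by rewrite -dotvNr -(enormN v); exact: CS.
  have hconv : convhull (secants X) (S^-1 *: v).
    exists (l + l), (fun i => p i / S), t; split => //.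
    - by move=> i; rewrite divr_ge0 // ltW.
    - by rewrite -mulr_suml divff // lt0r_neq0.
    - by rewrite /v scaler_sumr; apply: eq_bigr => i _; rewrite scalerA mulrC.
  have := hdist _ hconv.
  have hS1 : `|S^-1| = S^-1 by rewrite gtr0_norm // invr_gt0.
  rewrite -scalemxAr !enormZ -/N hS1 => hd.
  have hv : enorm v < N + eps / 60 * S.
    move: hd; rewrite ltr_norml => /andP [hd1 _].
    have h : S^-1 * enorm v < S^-1 * N + eps / 60 by lra.
    have hS : S * (S^-1 * enorm v) = enorm v by rewrite mulrA divff ?mul1r // lt0r_neq0.
    have hS' : S * (S^-1 * N) = N by rewrite mulrA divff ?mul1r // lt0r_neq0.
    nra.
  nra.
exists z; split.
  by rewrite /enorm -(ger0_norm rho0) -sqrtr_sqr; apply: ler_wsqrtr.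
move=> i; have := hz i.
rewrite /gtilde /= -/r -/rho /a /b /t.
case: (split i) => j /=; rewrite ?mulmxN ?dotvNr; lra.
Qed.
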